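(* For every $d\in\mathbb{N}$, the cones $\mathfrak{P}_{2d}$ and $\mathfrak{S}_{2d}$ are full-dimensional cones in $\mathbb{R}^{\pi(2d)}$.
   Context: For $n\ge 1$, $i\ge1$ let $p_i^{(n)}=\frac1n(x_1^i+\dots+x_n^i)$, and for a partition $\lambda=(\lambda_1,\dots,\lambda_l)$ of $k$ (weakly decreasing positive integers summing to $k$) let $p^{(n)}_\lambda=\prod_i p^{(n)}_{\lambda_i}$. $\pi(k)$ is the number of partitions of $k$. For $n\ge 2d$, $\{p^{(n)}_\lambda:\lambda\vdash 2d\}$ is a basis of the space $H^S_{n,2d}$ of symmetric forms of degree $2d$ in $n$ variables, which identifies $H^S_{n,2d}$ with $\mathbb{R}^{\pi(2d)}$. Define $\mathfrak{P}_{2d}$ (resp. $\mathfrak{S}_{2d}$) as the set of $(c_\lambda)_{\lambda\vdash 2d}\in\mathbb{R}^{\pi(2d)}$ such that $\sum_\lambda c_\lambda p^{(n)}_\lambda$ is a nonnegative form (resp. a sum of squares of real forms) for every $n\ge 2d$. *)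

(* Defs.v *)
From HB Require Import structures.
From mathcomp Require Import all_boot all_order all_algebra.
From mathcomp Require Import reals.
From mathcomp Require Import mpoly.
Set Implicit Arguments. Unset Strict Implicit. Unset Printing Implicit Defensive.
Import Order.TTheory GRing.Theory Num.Theory.
Local Open Scope ring_scope.

Definition is_partition (k : nat) (l : seq nat) : bool :=
  [&& sorted geq l, all (fun x => 0 < x)%N l & sumn l == k].

Fixpoint cand_seqs (len k : nat) : seq (seq nat) :=
  if len is len'.+1 then
    [::] :: [seq x :: s | x <- iota 1 k, s <- cand_seqs len' k]
  else [:: [::]].

(* duplicate-free enumeration of the partitions of k (every partition of k has
   length <= k and parts in {1,...,k}) *)
Definition partitions (k : nat) : seq (seq nat) :=
  undup [seq l <- cand_seqs k k | is_partition k l].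

Definition npart (k : nat) : nat := size (partitions k).

(* the partition indexing coordinate i of R^{pi(k)} *)
Definition part_of (k : nat) (i : 'I_(npart k)) : seq nat :=
  nth [::] (partitions k) i.

Definition psum (R : realType) (n i : nat) : {mpoly R[n]} :=
  (n%:R)^-1 *: \sum_(j < n) ('X_j) ^+ i.

Definition ppart (R : realType) (n : nat) (l : seq nat) : {mpoly R[n]} :=
  \prod_(i <- l) psum R n i.

Definition sym_form (R : realType) (k n : nat) (c : 'rV[R]_(npart k))
  : {mpoly R[n]} :=
  \sum_(i < npart k) c 0 i *: ppart R n (part_of i).

Definition nonneg_form (R : realType) (n : nat) (f : {mpoly R[n]}) : Prop :=
  forall x : 'I_n -> R, 0 <= f.@[x].

Definition sos_form (R : realType) (n : nat) (f : {mpoly R[n]}) : Prop :=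
  exists s : seq {mpoly R[n]},
    (forall q, q \in s -> exists e : nat, q \is e.-homog)
    /\ f = \sum_(q <- s) q ^+ 2.

(* P_{2d}: c such that sum c_lambda p_lambda^{(n)} is nonnegative for all n >= 2d
   (n >= 1 is a standing assumption of the context). *)
Definition Pcone (R : realType) (d : nat) (c : 'rV[R]_(npart d.*2)) : Prop :=
  forall n : nat, (1 <= n)%N -> (d.*2 <= n)%N -> nonneg_form (sym_form n c).

Definition Scone (R : realType) (d : nat) (c : 'rV[R]_(npart d.*2)) : Prop :=
  forall n : nat, (1 <= n)%N -> (d.*2 <= n)%N -> sos_form (sym_form n c).

Definition is_convex_cone (R : realType) (m : nat) (K : 'rV[R]_m -> Prop) : Prop :=
  [/\ K 0,
      (forall u v, K u -> K v -> K (u + v)) &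
      (forall (a : R) u, 0 <= a -> K u -> K (a *: u))].

(* K is full-dimensional: it has nonempty interior in R^m (an open sup-norm
   ball around some point is contained in K). *)
Definition full_dimensional (R : realType) (m : nat) (K : 'rV[R]_m -> Prop) : Prop :=
  exists c0 : 'rV[R]_m, exists2 e : R, 0 < e &
    forall c : 'rV[R]_m, (forall i : 'I_m, `|c 0 i - c0 0 i| < e) -> K c.

Arguments Pcone R d c : clear implicits.
Arguments Scone R d c : clear implicits.

(* Main.v *)
Require Import Defs.
From HB Require Import structures.
From mathcomp Require Import all_boot all_order all_algebra.
From mathcomp Require Import reals.
From mathcomp Require Import mpoly.
From mathcomp Require Import zify ring lra.
Set Implicit Arguments. Unset Strict Implicit. Unset Printing Implicit Defensive.
Import Order.TTheory GRing.Theory Num.Theory.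
Local Open Scope ring_scope.

Fixpoint spl (r : nat) (s : seq nat) : seq (nat * nat) :=
  match s with
  | [::] => [::]
  | x :: s' => (minn x r, x - minn x r)%N :: spl (r - minn x r) s'
  end.

Lemma spl_sum r s : [seq (p.1 + p.2)%N | p <- spl r s] = s.
Proof. elim: s r => [|x s IH] r //=; rewrite IH; congr (_ :: _); lia. Qed.

Lemma spl_fst r s : sumn [seq p.1 | p <- spl r s] = minn r (sumn s).
Proof. elim: s r => [|x s IH] r /=; first lia. rewrite IH; lia. Qed.

Lemma spl_fst_snd r s :
  (sumn [seq p.1 | p <- spl r s] + sumn [seq p.2 | p <- spl r s])%N = sumn s.
Proof. elim: s r => [|x s IH] r //=. have := IH (r - minn x r)%N; lia. Qed.

Definition kp (s : seq nat) := sort geq (filter (fun x => 0 < x)%N s).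
Definition idx k s := index (kp s) (partitions k).

Lemma sumn_filter_pos s : sumn (filter (fun x => 0 < x)%N s) = sumn s.
Proof. elim: s => [|x s IH] //=; case: (posnP x) => [->|hx] /=; by rewrite ?hx /= IH. Qed.

Lemma size_le_sumn s : all (fun x => 0 < x)%N s -> (size s <= sumn s)%N.
Proof. elim: s => [|x s IH] //= /andP[h1 h2]; have := IH h2; lia. Qed.

Lemma mem_le_sumn s x : x \in s -> (x <= sumn s)%N.
Proof. elim: s => [|y s IH] //=; rewrite inE => /orP[/eqP->|/IH]; lia. Qed.

Lemma cand_mem len k s : (size s <= len)%N -> all (fun x => 0 < x <= k)%N s ->
  s \in cand_seqs len k.
Proof.
elim: len s => [|len IH] [|x s] //= hs /andP[hx ha].
rewrite inE; apply/orP; right.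
apply: (allpairs_f (fun x s => x :: s)); last exact: IH.
by rewrite mem_iota; lia.
Qed.

Lemma kp_mem k s : sumn s = k -> kp s \in partitions k.
Proof.
move=> hs; have pk : perm_eq (kp s) (filter (fun x => 0 < x)%N s) by rewrite perm_sort.
have hsum : sumn (kp s) = k by rewrite (perm_sumn pk) sumn_filter_pos.
have hpos : all (fun x => 0 < x)%N (kp s) by rewrite (perm_all _ pk) filter_all.
rewrite mem_undup mem_filter; apply/andP; split.
  rewrite /is_partition hsum eqxx hpos andbT.
  rewrite andbT /kp; apply: sort_sorted => x y; exact: leq_total.
apply: cand_mem; first by rewrite -hsum size_le_sumn.
apply/allP => x hx; have := allP hpos x hx; have := mem_le_sumn hx; lia.
Qed.

Lemma idx_lt k s : sumn s = k -> (idx k s < npart k)%N.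
Proof. by move=> h; rewrite /idx /npart index_mem kp_mem. Qed.

Lemma part_idx k s (h : sumn s = k) : part_of (Ordinal (idx_lt h)) = kp s.
Proof. by rewrite /part_of /= /idx nth_index // kp_mem. Qed.

Lemma part_sum k (i : 'I_(npart k)) : sumn (part_of i) = k.
Proof.
have : part_of i \in partitions k by rewrite /part_of mem_nth.
by rewrite mem_undup mem_filter => /andP[/and3P[_ _ /eqP]].
Qed.

Section S.
Variable R : realType.
Variable n : nat.
Hypothesis n0 : (0 < n)%N.

Lemma Xhomog (j : 'I_n) k : ('X_j : {mpoly R[n]}) ^+ k \is k.-homog.
Proof.
have h1 : ('X_j : {mpoly R[n]}) \is 1.-homog by rewrite dhomogX /= mdeg1.
by have := dhomogMn k h1; rewrite mul1n.
Qed.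

Lemma sos0 : sos_form (0 : {mpoly R[n]}).
Proof. by exists [::]; rewrite big_nil. Qed.

Lemma sosD f g : sos_form f -> sos_form g -> sos_form (f + g : {mpoly R[n]}).
Proof.
move=> [s1 [h1 ->]] [s2 [h2 ->]]; exists (s1 ++ s2); rewrite big_cat; split=> //.
by move=> q; rewrite mem_cat => /orP[/h1|/h2].
Qed.

Lemma sosZ (a : R) f : 0 <= a -> sos_form f -> sos_form (a *: f : {mpoly R[n]}).
Proof.
move=> a0 [s [h ->]]; exists [seq Num.sqrt a *: q | q <- s]; split.
  move=> q /mapP[q' /h [e he] ->]; exists e; exact: dhomogZ.
rewrite big_map scaler_sumr; apply: eq_bigr => q _.
by rewrite exprZn sqr_sqrtr.
Qed.

Lemma sos_sq e q : q \is e.-homog -> sos_form (q ^+ 2 : {mpoly R[n]}).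
Proof. by move=> h; exists [:: q]; rewrite big_seq1; split=> // q'; rewrite inE => /eqP ->; exists e. Qed.

Lemma sos_sum (I : finType) (F : I -> {mpoly R[n]}) :
  (forall i, sos_form (F i)) -> sos_form (\sum_i F i).
Proof. move=> h; apply: (big_ind (@sos_form R n)) => //; [exact: sos0|exact: sosD]. Qed.

Lemma sos_nonneg f : sos_form f -> nonneg_form (f : {mpoly R[n]}).
Proof.
move=> [s [_ ->]] x; rewrite raddf_sum /=; apply: sumr_ge0 => q _.
by rewrite mevalM sqr_ge0.
Qed.

Lemma decomp (t : seq (nat * nat)) : exists (I : finType) (w : R)
   (A B : I -> {mpoly R[n]}), [/\ 0 < w,
   forall i, A i \is (sumn (map fst t)).-homog,
   forall i, B i \is (sumn (map snd t)).-homog,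
   \prod_(x <- t) psum R n (x.1 + x.2)%N = w *: \sum_i A i * B i &
   \prod_(x <- t) psum R n (x.1.*2) = w *: \sum_i A i ^+ 2 /\
   \prod_(x <- t) psum R n (x.2.*2) = w *: \sum_i B i ^+ 2].
Proof.
elim: t => [|[a b] t [I [w [A [B [w0 hA hB e1 [e2 e3]]]]]]].
  exists 'I_1, 1, (fun=> 1), (fun=> 1).
  rewrite !big_nil; do ![split] => //; try (by move=> _; apply: dhomog1).
  1-3: by rewrite big_ord1 ?mulr1 ?expr1n scale1r.
have hn : 0 <= (n%:R : R)^-1 by rewrite invr_ge0 ler0n.
exists ('I_n * I)%type, ((n%:R)^-1 * w), (fun p => 'X_(p.1) ^+ a * A p.2),
   (fun p => 'X_(p.1) ^+ b * B p.2).
have key : forall (F : 'I_n -> {mpoly R[n]}) (H : I -> {mpoly R[n]}),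
   ((n%:R)^-1 *: \sum_j F j) * (w *: \sum_i H i) =
   ((n%:R)^-1 * w) *: \sum_(p : 'I_n * I) (F p.1 * H p.2).
  move=> F H; rewrite -scalerAl -scalerAr scalerA; congr (_ *: _).
  rewrite mulr_suml; under eq_bigr do rewrite mulr_sumr.
  exact: (pair_bigA _ (fun j i => F j * H i)).
split; last split.
- by apply: mulr_gt0 => //; rewrite invr_gt0 ltr0n.
- move=> p /=; exact: dhomogM (Xhomog _ _) (hA _).
- move=> p /=; exact: dhomogM (Xhomog _ _) (hB _).
- rewrite big_cons e1 /psum /= key; congr (_ *: _); apply: eq_bigr => p _.
  by rewrite exprD mulrACA.
- rewrite big_cons e2 /psum /= key; congr (_ *: _); apply: eq_bigr => p _.
  by rewrite -addnn exprD exprMn expr2.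
- rewrite big_cons e3 /psum /= key; congr (_ *: _); apply: eq_bigr => p _.
  by rewrite -addnn exprD exprMn expr2.
Qed.

Lemma psum0 : psum R n 0 = 1.
Proof.
rewrite /psum; under eq_bigr do rewrite expr0.
rewrite sumr_const card_ord -scaler_nat scalerA mulVf ?scale1r //.
by rewrite pnatr_eq0 -lt0n.
Qed.

Lemma ppart_kp s : ppart R n (kp s) = ppart R n s.
Proof.
have pk : perm_eq (kp s) (filter (fun x => 0 < x)%N s) by rewrite perm_sort.
rewrite /ppart (perm_big _ pk) big_filter big_mkcond /=; apply: eq_bigr => x _.
by case: ifP => // /negbT; rewrite -eqn0Ngt => /eqP ->; rewrite psum0.
Qed.

Lemma sum_idx k s (h : sumn s = k) (F : 'I_(npart k) -> {mpoly R[n]}) :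
  \sum_(l < npart k) ((idx k s == l)%:R : R) *: F l = F (Ordinal (idx_lt h)).
Proof.
rewrite (bigD1 (Ordinal (idx_lt h))) //= eqxx scale1r big1 ?addr0 //.
move=> l hl; suff -> : (idx k s == l) = false by rewrite scale0r.
by apply/negbTE; apply: contra hl => /eqP e; apply/eqP/val_inj.
Qed.

Lemma term_sos (I : finType) (w dl : R) (A B : I -> {mpoly R[n]}) e :
  0 < w -> -1 <= dl <= 1 -> (forall i, A i \is e.-homog) ->
  (forall i, B i \is e.-homog) ->
  sos_form ((2^-1 : R) *: (w *: \sum_i A i ^+ 2 + w *: \sum_i B i ^+ 2)
            + dl *: (w *: \sum_i A i * B i)).
Proof.
move=> w0 /andP[d1 d2] hA hB; set c := w / 4.
have c0 : 0 < c by rewrite /c divr_gt0.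
have -> : (2^-1 : R) *: (w *: \sum_i A i ^+ 2 + w *: \sum_i B i ^+ 2)
            + dl *: (w *: \sum_i A i * B i) =
          (c * (1 + dl)) *: \sum_i (A i + B i) ^+ 2 +
          (c * (1 - dl)) *: \sum_i (A i - B i) ^+ 2.
  rewrite scalerDr !scalerA !scaler_sumr -!big_split /=; apply: eq_bigr => i _.
  have e1 : 2^-1 * w = c * 2 by rewrite /c; field.
  have e2 : dl * w = c * dl * 4 by rewrite /c; field.
  rewrite e1 e2 -!mul_mpolyC !mpolyCM ?mpolyCD ?mpolyCB ?mpolyC1 ?mpolyC_nat.
  ring.
apply: sosD; apply: sosZ.
- by apply: mulr_ge0; [exact: ltW | lra].
- apply: sos_sum => i; apply: (@sos_sq e); exact: dhomogD.
- by apply: mulr_ge0; [exact: ltW | lra].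
- apply: sos_sum => i; apply: (@sos_sq e); apply: dhomogD => //; by rewrite dhomogN.
Qed.
End S.

Section Lin.
Variable R : realType.
Local Open Scope ring_scope.

Lemma sym_formD k n (u v : 'rV[R]_(npart k)) :
  sym_form n (u + v) = sym_form n u + sym_form n v.
Proof. by rewrite /sym_form -big_split; apply: eq_bigr => i _; rewrite mxE scalerDl. Qed.

Lemma sym_formZ k n (a : R) (u : 'rV[R]_(npart k)) :
  sym_form n (a *: u) = a *: sym_form n u.
Proof. by rewrite /sym_form scaler_sumr; apply: eq_bigr => i _; rewrite mxE scalerA. Qed.

Lemma sym_form0 k n : sym_form n (0 : 'rV[R]_(npart k)) = 0.
Proof. by rewrite /sym_form big1 // => i _; rewrite mxE scale0r. Qed.

Lemma sumn_dbl (f : nat * nat -> nat) t :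
  sumn [seq (f p).*2 | p <- t] = (sumn [seq f p | p <- t]).*2.
Proof. elim: t => [|x t IH] //=; by rewrite IH doubleD. Qed.

Lemma Scone_full d : full_dimensional (Scone R d).
Proof.
pose k := d.*2.
pose ts (l : 'I_(npart k)) := spl d (part_of l).
pose a l := [seq p.1.*2 | p <- ts l].
pose b l := [seq p.2.*2 | p <- ts l].
have hfst l : sumn [seq p.1 | p <- ts l] = d.
  by rewrite /ts spl_fst part_sum /k; lia.
have hsnd l : sumn [seq p.2 | p <- ts l] = d.
  by have := spl_fst_snd d (part_of l); rewrite part_sum -/(ts l) hfst /k; lia.
have ha l : sumn (a l) = k by rewrite /a (sumn_dbl (fun p => p.1)) hfst.
have hb l : sumn (b l) = k by rewrite /b (sumn_dbl (fun p => p.2)) hsnd.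
pose c0 : 'rV[R]_(npart k) := \row_(l < npart k) (2^-1 * \sum_(i < npart k)
   (((idx k (a i) == l)%:R : R) + ((idx k (b i) == l)%:R))).
exists c0; exists 1 => // c hc n n1 hn.
pose dl := c - c0.
have -> : c = c0 + dl by rewrite /dl addrC subrK.
rewrite sym_formD.
have Ec0 : sym_form n c0 =
   \sum_(i < npart k) (2^-1 : R) *: (ppart R n (a i) + ppart R n (b i)).
  rewrite /sym_form; under eq_bigr do rewrite mxE -scalerA scaler_suml.
  rewrite -scaler_sumr exchange_big /= scaler_sumr; apply: eq_bigr => i _.
  congr (_ *: _); under eq_bigr do rewrite scalerDl.
  rewrite big_split /= (sum_idx (ha i)) (sum_idx (hb i)) !part_idx.
  by rewrite !ppart_kp.
rewrite Ec0 /sym_form -big_split /=; apply: sos_sum => l.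
have [I [w [A [B [w0 hA hB e1 [e2 e3]]]]]] := @decomp R n n1 (ts l).
have Pl : ppart R n (part_of l) = w *: \sum_i A i * B i.
  by rewrite -e1 /ppart -{1}(spl_sum d (part_of l)) big_map.
have Pa : ppart R n (a l) = w *: \sum_i A i ^+ 2 by rewrite -e2 /ppart big_map.
have Pb : ppart R n (b l) = w *: \sum_i B i ^+ 2 by rewrite -e3 /ppart big_map.
rewrite Pl Pa Pb; apply: (@term_sos R n I w (dl 0 l) A B d) => //.
- have hd : dl 0 l = c 0 l - c0 0 l by rewrite /dl !mxE.
  have := hc l; rewrite -hd ltr_norml => /andP[h1 h2].
  by apply/andP; split; apply: ltW.
- by move=> i; rewrite -(hfst l).
- by move=> i; rewrite -(hsnd l).
Qed.

End Lin.

Local Open Scope ring_scope.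

Theorem theorem1p2 (R : realType) (d : nat) :
  [/\ is_convex_cone (Pcone R d), full_dimensional (Pcone R d),
      is_convex_cone (Scone R d) & full_dimensional (Scone R d)].
Proof.
split.
- split.
  + move=> n _ _ x; by rewrite sym_form0 raddf0.
  + move=> u v hu hv n h1 h2 x; rewrite sym_formD mevalD.
    exact: addr_ge0 (hu n h1 h2 x) (hv n h1 h2 x).
  + move=> a u ha hu n h1 h2 x; rewrite sym_formZ mevalZ.
    exact: mulr_ge0 ha (hu n h1 h2 x).
- have [c0 [e e0 H]] := Scone_full R d.
  exists c0; exists e => // c hc n h1 h2.
  exact: sos_nonneg (H c hc n h1 h2).
- split.
  + move=> n _ _; rewrite sym_form0; exact: sos0.
  + move=> u v hu hv n h1 h2; rewrite sym_formD; exact: sosD (hu n h1 h2) (hv n h1 h2).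
  + move=> a u ha hu n h1 h2; rewrite sym_formZ; exact: sosZ ha (hu n h1 h2).
- exact: Scone_full.
Qed.
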